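(* For all $m,n\ge2$, $$\#\operatorname{vert}(\Box_m,\Diamond_n)\ge 2n+2mn(2n-1)+2mn(m-1)(n-1).$$
   Context: For convex polytopes $P,Q$, $\operatorname{Hom}(P,Q)$ is the set of maps $P\to Q$ that are restrictions of affine maps $\operatorname{Aff}(P)\to\operatorname{Aff}(Q)$; it is a convex polytope in the affine space of affine maps $\operatorname{Aff}(P)\to\operatorname{Aff}(Q)$, and $\operatorname{vert}(P,Q)$ denotes its set of vertices. $\Box_m=\operatorname{conv}\{(a_1,\ldots,a_m):a_i=\pm1\}\subset\mathbb{R}^m$, $\Diamond_n=\operatorname{conv}(\pm e_1,\ldots,\pm e_n)\subset\mathbb{R}^n$. *)

(* Defs.v *)
From HB Require Import structures.
From mathcomp Require Import all_boot all_order all_algebra.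
From mathcomp Require Import reals.
Set Implicit Arguments. Unset Strict Implicit. Unset Printing Implicit Defensive.
Import Order.TTheory GRing.Theory Num.Theory.
Local Open Scope ring_scope.

Section Defs.
Variable R : realType.

Definition conv (k : nat) (pts : seq 'cV[R]_k) (x : 'cV[R]_k) : Prop :=
  exists w : 'I_(size pts) -> R,
    (forall i, 0 <= w i) /\ \sum_i w i = 1 /\ x = \sum_i w i *: pts`_i.

Definition cube_pts (m : nat) : seq 'cV[R]_m :=
  [seq \col_i (if s i then 1 else -1) | s : {ffun 'I_m -> bool}].
Definition cube (m : nat) := conv (cube_pts m).

Definition cross_pts (n : nat) : seq 'cV[R]_n :=
  [seq delta_mx i 0 | i : 'I_n] ++ [seq - delta_mx i 0 | i : 'I_n].
Definition cross (n : nat) := conv (cross_pts n).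

Definition affmap (m n : nat) := ('M[R]_(n, m) * 'cV[R]_n)%type.
Definition app (m n : nat) (f : affmap m n) (x : 'cV[R]_m) : 'cV[R]_n :=
  f.1 *m x + f.2.

(* Hom(P, Q) for P = cube m, Q = cross n (both full-dimensional, so
   Aff(P) = R^m, Aff(Q) = R^n) *)
Definition Hom_cube_cross (m n : nat) (f : affmap m n) : Prop :=
  forall x, @cube m x -> @cross n (app f x).

Definition affcomb (m n : nat) (t : R) (f g : affmap m n) : affmap m n :=
  (t *: f.1 + (1 - t) *: g.1, t *: f.2 + (1 - t) *: g.2).

Definition is_vertex (m n : nat) (K : affmap m n -> Prop) (f : affmap m n) : Prop :=
  K f /\ forall g h t, K g -> K h -> 0 < t < 1 -> f = affcomb t g h -> g = h.

End Defs.

(* Main.v *)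
Require Import Defs.
From HB Require Import structures.
From mathcomp Require Import all_boot all_order all_algebra.
From mathcomp Require Import reals.
From mathcomp Require boolp.
From mathcomp Require Import ring lra zify.
Import Order.TTheory GRing.Theory Num.Theory.
Local Open Scope ring_scope.
Set Implicit Arguments. Unset Strict Implicit.

Section Aux.
Variable R : realType.

Lemma conv_nth k (pts : seq 'cV[R]_k) (l : 'I_(size pts)) : conv pts pts`_l.
Proof.
exists (fun l' => ((l' == l) : nat)%:R); split; first by move=> i; rewrite ler0n.
split.
- by rewrite (bigD1 l) //= eqxx big1 ?addr0 // => i /negbTE ->.
- by rewrite (bigD1 l) //= eqxx scale1r big1 ?addr0 // => i /negbTE ->; rewrite scale0r.
Qed.

Lemma conv_mem k (pts : seq 'cV[R]_k) x : x \in pts -> conv pts x.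
Proof.
move=> xp; have xi : (index x pts < size pts)%N by rewrite index_mem.
by have := conv_nth (Ordinal xi); rewrite /= nth_index.
Qed.

Lemma conv_comb k (pts : seq 'cV[R]_k) p (w : 'I_p -> R) (z : 'I_p -> 'cV[R]_k) :
  (forall j, 0 <= w j) -> \sum_j w j = 1 -> (forall j, conv pts (z j)) ->
  conv pts (\sum_j w j *: z j).
Proof.
move=> w0 w1 zc.
have [W HW] := boolp.choice zc.
exists (fun l => \sum_j w j * W j l); split.
  by move=> l; apply: sumr_ge0 => j _; apply: mulr_ge0 => //; case: (HW j).
split.
  rewrite exchange_big /= -w1; apply: eq_bigr => j _.
  by rewrite -mulr_sumr; case: (HW j) => _ [-> _]; rewrite mulr1.
symmetry; under eq_bigr => l _ do rewrite scaler_suml.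
rewrite exchange_big /=; apply: eq_bigr => j _.
case: (HW j) => _ [_ ->]; rewrite scaler_sumr; apply: eq_bigr => l _.
by rewrite scalerA.
Qed.


Definition sg (b : bool) : R := if b then 1 else -1.
Definition vec n (u : bool * 'I_n) : 'cV[R]_n := sg u.1 *: delta_mx u.2 0.

Lemma vecE n (u : bool * 'I_n) r : vec u r 0 = if r == u.2 then sg u.1 else 0.
Proof. by rewrite /vec !mxE eqxx andbT; case: eqP => _; rewrite ?mulr1 ?mulr0. Qed.

Lemma sg_sq b : sg b * sg b = 1.
Proof. by case: b; rewrite /sg ?mulr1 ?mulrNN ?mulr1. Qed.

Lemma sg_neq0 b : sg b != 0.
Proof. by case: b; rewrite /sg ?oppr_eq0 oner_eq0. Qed.

Lemma vec_inj n : injective (@vec n).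
Proof.
move=> [b j] [b' j'] /matrixP E; have := E j 0; clear E.
rewrite !vecE /= eqxx.
case: eqP => [<-|_] H.
  by case: b H; case: b' => //; rewrite /sg => H; exfalso; lra.
by exfalso; case: b H; rewrite /sg => H; lra.
Qed.

Lemma cross_pts_vec n p : p \in cross_pts R n -> exists u, p = vec u.
Proof.
rewrite mem_cat => /orP[] /mapP[j _ ->]; [exists (true,j) | exists (false,j)];
  by rewrite /vec /sg /= ?scale1r ?scaleN1r.
Qed.

Lemma vec_cross n u : @cross R n (vec u).
Proof.
apply: conv_mem; rewrite mem_cat; case: u => [[] j]; rewrite /vec /sg /= ?scale1r ?scaleN1r;
  apply/orP; [left|right]; apply/mapP; exists j; by rewrite ?mem_enum.
Qed.

Lemma pt_cases n (u : bool * 'I_n) p : p \in cross_pts R n ->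
  p = vec u \/ sg u.1 * p u.2 0 <= 0.
Proof.
move=> /cross_pts_vec [[b j] ->]; rewrite vecE /=.
case: u => [b' j'] /=; case: (eqVneq j' j) => [->|_]; last by rewrite mulr0; right.
case: (eqVneq b' b) => [->|]; first by left.
by case: b; case: b' => //= _; right; rewrite /sg; lra.
Qed.

Lemma cross_le n (u : bool * 'I_n) y : @cross R n y ->
  sg u.1 * y u.2 0 <= 1 /\ (sg u.1 * y u.2 0 = 1 -> y = vec u).
Proof.
case=> W [W0 [W1 ->]].
set F := fun l : 'I_(size (cross_pts R n)) => sg u.1 * (cross_pts R n)`_l u.2 0.
have E : sg u.1 * (\sum_l W l *: (cross_pts R n)`_l) u.2 0 = \sum_l W l * F l.
  rewrite summxE mulr_sumr; apply: eq_bigr => l _; rewrite mxE /F; ring.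
have HF (l : 'I_(size (cross_pts R n))) : (cross_pts R n)`_l = vec u \/ F l <= 0.
  by apply: pt_cases; apply: mem_nth.
have F1 (l : 'I_(size (cross_pts R n))) : F l <= 1.
  case: (HF l) => [e|]; last by move=> h; lra.
  by rewrite /F e vecE eqxx sg_sq.
rewrite E; split.
  rewrite -W1; apply: ler_sum => l _; rewrite -[X in _ <= X]mulr1.
  by apply: ler_wpM2l.
move=> S1.
have S0 : \sum_l W l * (1 - F l) = 0.
  have -> : \sum_l W l * (1 - F l) = \sum_l W l - \sum_l W l * F l.
    by rewrite -sumrB; apply: eq_bigr => l _; ring.
  by rewrite W1 S1 subrr.
have Z (l : 'I_(size (cross_pts R n))) : W l * (1 - F l) = 0.
  apply: (psumr_eq0P _ S0) => // i _; apply: mulr_ge0 => //.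
  by have := F1 i; lra.
have -> : \sum_l W l *: (cross_pts R n)`_l = \sum_l W l *: vec u.
  apply: eq_bigr => l _; case: (HF l) => [->//|h].
  have := Z l; move/eqP; rewrite mulf_eq0 => /orP[/eqP ->|]; first by rewrite !scale0r.
  by rewrite subr_eq0 => /eqP h1; exfalso; lra.
by rewrite -scaler_suml W1 scale1r.
Qed.

Section Vert.
Variables m n : nat.

Definition sv (s : {ffun 'I_m -> bool}) : 'cV[R]_m := \col_i (if s i then 1 else -1).

Lemma sv_cube s : @cube R m (sv s).
Proof. by apply: conv_mem; apply/mapP; exists s; rewrite ?mem_enum. Qed.

Lemma cube_pts_sv p : p \in cube_pts R m -> exists s, p = sv s.
Proof. by move/mapP => [s _ ->]; exists s. Qed.

Lemma app_ext (g h : affmap R m n) : (forall s, app g (sv s) = app h (sv s)) -> g = h.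
Proof.
case: g => Ag bg; case: h => Ah bh; rewrite /app /= => E.
set s1 : {ffun 'I_m -> bool} := [ffun _ => true].
have EA : Ag = Ah.
  apply/matrixP => r c.
  set s2 : {ffun 'I_m -> bool} := [ffun x => x != c].
  have D : sv s1 - sv s2 = 2 *: delta_mx c 0.
    apply/matrixP => i j; rewrite !mxE !ffunE (ord1 j) eqxx andbT.
    by case: (eqVneq i c) => _ /=; rewrite ?mulr1 ?mulr0; lra.
  have H : Ag *m (sv s1 - sv s2) = Ah *m (sv s1 - sv s2).
    rewrite !mulmxBr.
    have -> : Ag *m sv s1 - Ag *m sv s2 = (Ag *m sv s1 + bg) - (Ag *m sv s2 + bg).
      by rewrite opprD addrACA subrr addr0.
    have -> : Ah *m sv s1 - Ah *m sv s2 = (Ah *m sv s1 + bh) - (Ah *m sv s2 + bh).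
      by rewrite opprD addrACA subrr addr0.
    by rewrite E E.
  move: H; rewrite D -!scalemxAr -!colE => H.
  have := congr1 (fun M : 'cV[R]_n => M r 0) H; rewrite /= !mxE.
  by apply: mulfI; rewrite pnatr_eq0.
congr (_, _) => //.
by have := E s1; rewrite EA; apply: addrI.
Qed.

Lemma entry_comb (y z : 'cV[R]_n) t i : (t *: y + (1 - t) *: z) i 0 = t * y i 0 + (1-t) * z i 0.
Proof. by rewrite !mxE. Qed.

Lemma vertex_of (f : affmap R m n) (gf : {ffun 'I_m -> bool} -> bool * 'I_n) :
  (forall s, app f (sv s) = vec (gf s)) -> is_vertex (@Hom_cube_cross R m n) f.
Proof.
move=> Hf.
have Hom_f : Hom_cube_cross f.
  move=> x [w [w0 [w1 ->]]].
  have -> : app f (\sum_l w l *: (cube_pts R m)`_l) = \sum_l w l *: app f (cube_pts R m)`_l.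
    rewrite /app; symmetry; under eq_bigr do rewrite scalerDr.
    rewrite big_split /= -scaler_suml w1 scale1r mulmx_sumr; congr (_ + _).
    by apply: eq_bigr => l _; rewrite scalemxAr.
  apply: conv_comb => // l.
  have [s ->] := cube_pts_sv (mem_nth 0 (ltn_ord l)).
  by rewrite Hf; apply: vec_cross.
split => // g h t Hg Hh /andP[t0 t1] E.
apply: app_ext => s.
have Ef : app f (sv s) = t *: app g (sv s) + (1 - t) *: app h (sv s).
  by rewrite E /app /affcomb /= mulmxDl -!scalemxAl !scalerDr addrACA.
have Cg := Hg _ (sv_cube s); have Ch := Hh _ (sv_cube s).
rewrite Hf in Ef.
set u := gf s in Ef.
have [g1 g2] := cross_le u Cg; have [h1 h2] := cross_le u Ch.
have : sg u.1 * vec u u.2 0 = 1 by rewrite vecE eqxx sg_sq.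
rewrite Ef entry_comb => e1.
set a := sg u.1 * app g (sv s) u.2 0 in g1 g2.
set b := sg u.1 * app h (sv s) u.2 0 in h1 h2.
have e2 : t * a + (1 - t) * b = 1 by rewrite /a /b -[X in _ = X]e1; ring.
have ea : a = 1 by nra.
have eb : b = 1 by nra.
by rewrite (g2 ea) (h2 eb).
Qed.

Definition V := (bool * 'I_n)%type.
Definition other (v : V) (t : 'I_#|{: V}|.-1) : V := enum_val (lift (enum_rank v) t).

Lemma other_neq v t : other v t != v.
Proof.
apply/eqP => /(congr1 enum_rank); rewrite /other enum_valK => /eqP.
by rewrite eq_sym (negbTE (neq_lift _ _)).
Qed.

Lemma other_inj v : injective (other v).
Proof. by move=> t1 t2 /enum_val_inj /lift_inj. Qed.

Definition negV (u : V) : V := (~~ u.1, u.2).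

Lemma vec_neg (u : V) : vec (negV u) = - vec u.
Proof. by case: u => [[] j]; rewrite /vec /sg /= ?scaleN1r ?scale1r ?opprK. Qed.

Definition P := (V + (('I_m * V * 'I_#|{: V}|.-1) + ('I_m * 'I_m.-1 * V * 'I_n.-1)))%type.

Definition gp (p : P) (s : {ffun 'I_m -> bool}) : V :=
  match p with
  | inl u => u
  | inr (inl (i, v, t)) => if s i then v else other v t
  | inr (inr (i, t, u, t')) =>
      if s i then (if s (lift i t) then u else (true, lift u.2 t'))
      else (if s (lift i t) then negV (true, lift u.2 t') else negV u)
  end.

Definition colmx (i : 'I_m) (d : 'cV[R]_n) : 'M[R]_(n, m) :=
  \matrix_(r, c) (if c == i then d r 0 else 0).

Lemma colmxM i d x : colmx i d *m x = x i 0 *: d.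
Proof.
apply/matrixP => r j; rewrite !mxE (bigD1 i) //= mxE eqxx big1 ?addr0.
  by rewrite (ord1 j) mulrC.
by move=> c /negbTE ci; rewrite mxE ci mul0r.
Qed.

Definition phi (p : P) : affmap R m n :=
  match p with
  | inl u => (0, vec u)
  | inr (inl (i, v, t)) =>
      (colmx i (2^-1 *: (vec v - vec (other v t))), 2^-1 *: (vec v + vec (other v t)))
  | inr (inr (i, t, u, t')) =>
      (colmx i (2^-1 *: (vec u + vec (true, lift u.2 t')))
       + colmx (lift i t) (2^-1 *: (vec u - vec (true, lift u.2 t'))), 0)
  end.

Lemma app_phi p s : app (phi p) (sv s) = vec (gp p s).
Proof.
case: p => [u|[[[i v] t]|[[[i t] u] t']]]; rewrite /app /=.
- by rewrite mul0mx add0r.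
- rewrite colmxM mxE; case: (s i); move: (vec v) (vec (other v t)) => x y;
  by apply/matrixP => r c; rewrite !mxE; field.
- rewrite mulmxDl !colmxM !mxE addr0; case: (s i); case: (s (lift i t));
    rewrite ?vec_neg; move: (vec u) (vec (true, lift u.2 t')) => x y;
    by apply/matrixP => r c; rewrite !mxE; field.
Qed.


Definition sT : {ffun 'I_m -> bool} := [ffun _ => true].
Definition fl (c : 'I_m) : {ffun 'I_m -> bool} := [ffun x => x != c].

Lemma lift_eq' k (i : 'I_k) t : (lift i t == i) = false.
Proof. by rewrite eq_sym (negbTE (neq_lift _ _)). Qed.

Lemma pairV (a b : bool) (x y : 'I_n) : ((a, x) : V) = (b, y) -> a = b /\ x = y.
Proof. by case=> -> ->. Qed.

Lemma gp12 u i v t : ~ (forall s, gp (inl u) s = gp (inr (inl (i, v, t))) s).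
Proof.
move=> E; have := E sT; have := E (fl i); rewrite /= !ffunE /= eqxx /= => -> /eqP.
by rewrite (negbTE (other_neq _ _)).
Qed.

Lemma gp13 u i t u2 t' : ~ (forall s, gp (inl u) s = gp (inr (inr (i, t, u2, t'))) s).
Proof.
case: u2 => b2 j2; move=> E; have := E sT; have := E (fl i); rewrite /= !ffunE /= eqxx lift_eq' /= => -> /pairV [_].
by move/eqP; rewrite lift_eq'.
Qed.

Lemma gp23 i v t i2 t2 u2 t2' :
  ~ (forall s, gp (inr (inl (i, v, t))) s = gp (inr (inr (i2, t2, u2, t2'))) s).
Proof.
case: u2 => b2 j2; move=> E; have := E sT; rewrite /= !ffunE /= => ev.
case: (eqVneq i i2) => [ei|ni].
  have := E (fl (lift i2 t2)); rewrite /= !ffunE /= eqxx ei eq_sym lift_eq' /= ev.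
  by move/pairV => [_ /eqP]; rewrite eq_sym lift_eq'.
have := E (fl i2); rewrite /= !ffunE /= eqxx ni lift_eq' /= ev.
by move/pairV => [_ /eqP]; rewrite eq_sym lift_eq'.
Qed.

Lemma gp_inj p q : (forall s, gp p s = gp q s) -> p = q.
Proof.
case: p => [u|[[[i v] t]|[[[i t] [b j]] t']]];
  case: q => [u2|[[[i2 v2] t2]|[[[i2 t2] [b2 j2]] t2']]] => E.
- by have := E sT => /= ->.
- by case: (gp12 E).
- by case: (gp13 E).
- by case: (gp12 (fun s => esym (E s))).
- have := E sT; rewrite /= !ffunE /= => ev; subst v2.
  case: (eqVneq i i2) => [ei|ni].
    subst i2; have := E (fl i); rewrite /= !ffunE /= eqxx /= => /other_inj -> //.
  have := E (fl i); rewrite /= !ffunE /= eqxx eq_sym ni /= => /eqP.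
  by rewrite (negbTE (other_neq _ _)).
- by case: (gp23 E).
- by case: (gp13 (fun s => esym (E s))).
- by case: (gp23 (fun s => esym (E s))).
- have := E sT; rewrite /= !ffunE /= => -[eb ej]; subst b2 j2.
  have := E (fl i); rewrite /= !ffunE /= eqxx lift_eq' /=.
  case: (eqVneq i i2) => [ei|ni].
    subst i2; rewrite lift_eq' /negV /= => /pairV [_ /lift_inj et']; subst t2'.
    case: (eqVneq (lift i t) (lift i t2)) => [/lift_inj -> //|nk].
    have := E (fl (lift i t)); rewrite /= !ffunE /= eqxx eq_sym lift_eq' /= eq_sym (negbTE nk) /=.
    by move/pairV => [_ /eqP]; rewrite lift_eq'.
  case: (eqVneq (lift i2 t2) i) => [ek|nk] /=.
    by rewrite /negV /= => /pairV [].
  by rewrite /negV /= => /pairV [_ /eqP]; rewrite lift_eq'.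
Qed.

Lemma phi_inj : injective phi.
Proof.
move=> p q E; apply: gp_inj => s; apply: vec_inj.
by rewrite -!app_phi E.
Qed.

Lemma card_P : #|{: P}| = (2 * n + m * (2 * n) * (2 * n).-1 + m * m.-1 * (2 * n) * n.-1)%N.
Proof. by rewrite /P /V !card_sum !card_prod !card_ord card_bool addnA. Qed.
End Vert.
End Aux.

Theorem proposition7p1 (R : realType) (m n : nat) (hm : (2 <= m)%N) (hn : (2 <= n)%N) :
  exists v : 'I_(2 * n + 2 * m * n * (2 * n - 1) + 2 * m * n * (m - 1) * (n - 1))
               -> affmap R m n,
    injective v /\ forall i, is_vertex (@Hom_cube_cross R m n) (v i).
Proof.
have E : #|{: P m n}| = (2 * n + 2 * m * n * (2 * n - 1) + 2 * m * n * (m - 1) * (n - 1))%N.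
  rewrite card_P; case: m hm => // m' _; case: n hn => // n' _.
  have -> : (2 * n'.+1).-1 = (2 * n').+1 by rewrite mulnS.
  rewrite !subn1 (_ : (2 * n'.+1).-1 = (2 * n').+1) ?mulnS // (_ : m'.+1.-1 = m') // (_ : n'.+1.-1 = n') //.
  ring.
exists (fun i => phi R (enum_val (cast_ord (esym E) i))); split.
  by move=> i j /phi_inj /enum_val_inj /cast_ord_inj.
by move=> i; apply: (@vertex_of R m n _ (gp (enum_val (cast_ord (esym E) i)))) => s; apply: app_phi.
Qed.
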